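(* Let $f:\mathbb{R}^n\to\mathbb{R}$ be bounded below and continuously differentiable with $\nabla f$ Lipschitz with constant $L_{\nabla f}$. Let $x\in\mathbb{R}^n$, $\Delta>0$, points $y_1,\ldots,y_p$ with $\|y_i-x\|\le\beta\Delta$ for some $\beta>0$ and all $i$, and let $m$ be the minimum Frobenius norm quadratic interpolation model described in the context, with $\hat F$ invertible. Then for all $y\in B(x,\Delta)$, $|m(y)-f(y)|\le\kappa_{\mathrm{mf}}\Delta^2$ and $\|\nabla m(y)-\nabla f(y)\|\le\kappa_{\mathrm{mg}}\Delta$, where $$\kappa_{\mathrm{mf}}=\frac{L_{\nabla f}+\kappa_H}{2}(1+\sqrt n)\beta^2\|\hat M^\dagger\|_\infty+\frac{L_{\nabla f}+\kappa_H}{2},\qquad\kappa_{\mathrm{mg}}=2\kappa_{\mathrm{mf}}+2\kappa_H,$$ and $\kappa_H:=\frac{L_{\nabla f}}{2}p\beta^4\|\hat F^{-1}\|_\infty$.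
   Context: Here $n+2\le p\le(n+1)(n+2)/2-1$. Let $\hat s_i=(y_i-x)/\Delta$, $\hat M\in\mathbb{R}^{p\times(n+1)}$ with $i$-th row $[1,\hat s_i^T]$ (with Moore–Penrose pseudoinverse $\hat M^\dagger$), $\hat P\in\mathbb{R}^{p\times p}$ with $\hat P_{ij}=\tfrac12(\hat s_i^T\hat s_j)^2$, and $\hat F=\begin{bmatrix}\hat P&\hat M\\ \hat M^T&0\end{bmatrix}$. The model is $m(y)=c+g^T(y-x)+\tfrac12(y-x)^TH(y-x)$ where $(\hat\lambda_1,\ldots,\hat\lambda_p,c,\hat g)$ solves $\hat F[\hat\lambda;c;\hat g]=[f(y_1);\ldots;f(y_p);0;0_n]$, $g=\hat g/\Delta$, $H=\sum_{i}\lambda_i(y_i-x)(y_i-x)^T$ with $\lambda_i=\hat\lambda_i/\Delta^4$; equivalently $(c,g,H)$ minimizes $\tfrac14\|H\|_F^2$ over symmetric $H$ subject to $m(y_i)=f(y_i)$ for all $i$. $\|A\|_\infty$ is the maximum absolute row sum; $B(x,\Delta)=\{y:\|y-x\|\le\Delta\}$. *)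

(* Defs.v *)
From HB Require Import structures.
From mathcomp Require Import all_boot all_order all_algebra.
From mathcomp Require Import all_classical all_reals all_analysis.
Set Implicit Arguments.
Unset Strict Implicit.
Unset Printing Implicit Defensive.
Import Order.TTheory GRing.Theory Num.Theory.
Import numFieldNormedType.Exports.
Local Open Scope ring_scope.

Section Defs.
Variable R : realType.

Definition dotv {n : nat} (u v : 'rV[R]_n) : R := \sum_(j < n) u 0 j * v 0 j.
Definition enorm {n : nat} (v : 'rV[R]_n) : R := Num.sqrt (dotv v v).

Definition grad {n : nat} (f : 'rV[R]_n -> R) (x : 'rV[R]_n) : 'rV[R]_n :=
  \row_(j < n) ('d f x (delta_mx 0 j : 'rV[R]_n)).

Definition inf_norm {m k : nat} (A : 'M[R]_(m, k)) : R :=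
  \big[Num.max/0]_(i < m) \sum_(j < k) `|A i j|.

Definition is_MP_pinv {m k : nat} (A : 'M[R]_(m, k)) (X : 'M[R]_(k, m)) : Prop :=
  [/\ A *m X *m A = A, X *m A *m X = X,
      (A *m X)^T = A *m X & (X *m A)^T = X *m A].

Variables (n p : nat) (x : 'rV[R]_n) (Delta : R) (ys : 'I_p -> 'rV[R]_n).

Definition shat (i : 'I_p) : 'rV[R]_n := Delta^-1 *: (ys i - x).

Definition Mhat : 'M[R]_(p, 1 + n) :=
  row_mx (const_mx 1) (\matrix_(i < p, j < n) shat i 0 j).

Definition Phat : 'M[R]_p :=
  \matrix_(i < p, j < p) (2^-1 * (dotv (shat i) (shat j)) ^+ 2).

Definition Fhat : 'M[R]_(p + (1 + n)) := block_mx Phat Mhat Mhat^T 0.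

Variable f : 'rV[R]_n -> R.

Definition rhs : 'cV[R]_(p + (1 + n)) := col_mx (\col_(i < p) f (ys i)) 0.

Definition sol : 'cV[R]_(p + (1 + n)) := invmx Fhat *m rhs.

Definition lamhat (i : 'I_p) : R := sol (lshift (1 + n) i) 0.
Definition cmod : R := sol (rshift p (lshift n (0 : 'I_1))) 0.
Definition ghat : 'rV[R]_n := \row_(j < n) sol (rshift p (rshift 1 j)) 0.

Definition gmod : 'rV[R]_n := Delta^-1 *: ghat.
Definition lam (i : 'I_p) : R := lamhat i / Delta ^+ 4.
Definition Hmod : 'M[R]_n := \sum_(i < p) lam i *: ((ys i - x)^T *m (ys i - x)).

Definition model (y : 'rV[R]_n) : R :=
  cmod + dotv gmod (y - x) + 2^-1 * ((y - x) *m Hmod *m (y - x)^T) 0 0.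

End Defs.

(* Main.v *)
Require Import Defs.
From HB Require Import structures.
From mathcomp Require Import all_boot all_order all_algebra.
From mathcomp Require Import all_classical all_reals all_analysis.
From mathcomp.algebra_tactics Require Import ring lra.
Import Order.TTheory GRing.Theory Num.Theory.
Import numFieldNormedType.Exports.
Local Open Scope ring_scope.

Section Eucl.
Context {R : realType} {n : nat}.
Implicit Types u v w : 'rV[R]_n.

Lemma dotvC u v : dotv u v = dotv v u.
Proof. by apply: eq_bigr => j _; rewrite mulrC. Qed.

Lemma dotvDl u v w : dotv (u + v) w = dotv u w + dotv v w.
Proof. by rewrite /dotv -big_split; apply: eq_bigr => j _; rewrite mxE mulrDl. Qed.

Lemma dotvZl a u v : dotv (a *: u) v = a * dotv u v.
Proof. by rewrite /dotv mulr_sumr; apply: eq_bigr => j _; rewrite mxE mulrA. Qed.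

Lemma dotvNl u v : dotv (- u) v = - dotv u v.
Proof. by rewrite -scaleN1r dotvZl mulN1r. Qed.

Lemma dotvBl u v w : dotv (u - v) w = dotv u w - dotv v w.
Proof. by rewrite dotvDl dotvNl. Qed.

Lemma dotvDr u v w : dotv w (u + v) = dotv w u + dotv w v.
Proof. by rewrite !(dotvC w) dotvDl. Qed.

Lemma dotvZr a u v : dotv v (a *: u) = a * dotv v u.
Proof. by rewrite !(dotvC v) dotvZl. Qed.

Lemma dotvBr u v w : dotv w (u - v) = dotv w u - dotv w v.
Proof. by rewrite !(dotvC w) dotvBl. Qed.

Lemma dotv_ge0 u : 0 <= dotv u u.
Proof. by apply: sumr_ge0 => j _; rewrite -expr2 sqr_ge0. Qed.

Lemma dotv0 u : dotv u u = 0 -> u = 0.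
Proof.
move=> /eqP; rewrite /dotv psumr_eq0; last by move=> j _; rewrite -expr2 sqr_ge0.
move=> /allP H; apply/rowP => j; rewrite mxE.
have := H j (mem_index_enum j); rewrite -expr2 sqrf_eq0 => /eqP //.
Qed.

Lemma enorm_ge0 u : 0 <= enorm u.
Proof. exact: sqrtr_ge0. Qed.

Lemma sqr_enorm u : enorm u ^+ 2 = dotv u u.
Proof. by rewrite sqr_sqrtr // dotv_ge0. Qed.

Lemma CS2 u v : dotv u v ^+ 2 <= dotv u u * dotv v v.
Proof.
have [v0|vpos] := eqVneq (dotv v v) 0.
  have z : forall w, dotv w 0 = 0 by move=> w; rewrite /dotv big1 // => j _; rewrite mxE mulr0.
  by rewrite (dotv0 v v0) !z expr0n mulr0.
have vp : 0 < dotv v v by rewrite lt_def vpos dotv_ge0.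
set t := dotv u v / dotv v v.
have := dotv_ge0 (u - t *: v).
rewrite !(dotvBl, dotvBr, dotvZl, dotvZr) (dotvC v u).
rewrite /t => H.
have : 0 <= (dotv u u - dotv u v ^+2 / dotv v v) * dotv v v.
  apply: mulr_ge0; last exact: ltW.
  move: H; congr (_ <= _); field; exact: vpos.
rewrite mulrBl -mulrA mulVf // mulr1 subr_ge0 //.
Qed.

Lemma CS u v : `|dotv u v| <= enorm u * enorm v.
Proof.
rewrite /enorm -sqrtrM ?dotv_ge0 // -sqrtr_sqr.
exact: ler_wsqrtr (CS2 u v).
Qed.

Lemma enormD u v : enorm (u + v) <= enorm u + enorm v.
Proof.
rewrite -(ler_pXn2r (n:=2)) //; last 2 first.
- by rewrite nnegrE enorm_ge0.
- by rewrite nnegrE addr_ge0 ?enorm_ge0.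
rewrite sqr_enorm dotvDl !dotvDr (dotvC v u) sqrrD !sqr_enorm.
have := CS u v; have := ler_norm (dotv u v); lra.
Qed.

Lemma enormZ a u : enorm (a *: u) = `|a| * enorm u.
Proof.
rewrite /enorm dotvZl dotvZr mulrA -expr2 sqrtrM ?sqr_ge0 //.
by rewrite sqrtr_sqr.
Qed.

Lemma enormN u : enorm (- u) = enorm u.
Proof. by rewrite -scaleN1r enormZ normrN normr1 mul1r. Qed.

Lemma enormB u v : enorm (u - v) = enorm (v - u).
Proof. by rewrite -enormN opprB. Qed.

Lemma enorm_coord u c : (forall j, `|u 0 j| <= c) -> enorm u <= Num.sqrt n%:R * c.
Proof.
move=> H.
case: n u H => [|m] u H.
  by rewrite /enorm /dotv !big_ord0 sqrtr0 mul0r.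
have c0 : 0 <= c by exact: le_trans (H ord0).
rewrite /enorm -(ger0_norm c0) -sqrtr_sqr -sqrtrM // ; apply: ler_wsqrtr.
apply: (@le_trans _ _ (\sum_(j < m.+1) c ^+ 2)).
  apply: ler_sum => j _; rewrite -expr2 -real_normK ?num_real //.
  by rewrite lerXn2r ?nnegrE ?normr_ge0 // ?(le_trans _ (H j)) // ger0_norm.
by rewrite sumr_const card_ord mulr_natl.
Qed.

Lemma gradE (f : 'rV[R]_n -> R) y j : grad f y 0 j = 'd f y (delta_mx 0 j : 'rV[R]_n).
Proof. by rewrite /grad mxE. Qed.

End Eucl.

Local Opaque grad.

Section Mono.
Variable R : realType.

Lemma dq (a b t : R) : is_derive t 1 (fun s : R => a * s + b * (s * s)) (a + b * (t + t)).
Proof.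
have hid := is_derive_id t (1 : R).
have h := is_deriveD (is_deriveZ a hid) (is_deriveZ b (is_deriveM hid hid)).
have E : (fun s : R => a * s + b * (s * s)) = (a \*: id + b \*: (id * id))%R.
  by apply/funext => s.
rewrite E; apply: (is_derive_eq h).
rewrite /= /GRing.scale /=.
by rewrite !mulr1.
Qed.


Lemma mono_ub (psi : R -> R) (a b : R) :
  (forall t, derivable psi t 1) ->
  (forall t, 0 < t < 1 -> derive1 psi t <= a + b * t) ->
  psi 1 - psi 0 <= a + b / 2.
Proof.
move=> dpsi hle.
pose q := fun s : R => a * s + (b / 2) * (s * s).
pose phi := psi - q.
have dphi t : derivable phi t 1.
  by apply: derivableB => //; have := dq a (b / 2) t => -[].
have phider t : derive1 phi t = derive1 psi t - (a + b / 2 * (t + t)).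
  rewrite !derive1E deriveB //.
  by have [_ ->] := dq a (b / 2) t.
have : phi 1 <= phi 0.
  apply: (@ler0_derive1_le_cc _ phi 0 1).
  - by move=> t _; exact: dphi.
  - move=> t; rewrite in_itv /= => /andP[t0 t1].
    rewrite phider.
    have := hle t; rewrite t0 t1 => /(_ isT); lra.
  - by apply: derivable_within_continuous => t _; exact: dphi.
  - by rewrite in_itv /= ler01 lexx.
  - by rewrite in_itv /= ler01 lexx.
  - exact: ler01.
move=> H; have : psi 1 - q 1 <= psi 0 - q 0 by exact: H.
rewrite /q; lra.
Qed.

End Mono.

Section Mono2.
Variable R : realType.
Lemma mono_lb (psi : R -> R) (a b : R) :
  (forall t, derivable psi t 1) ->
  (forall t, 0 < t < 1 -> a - b * t <= derive1 psi t) ->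
  a - b / 2 <= psi 1 - psi 0.
Proof.
move=> dpsi hle.
have := @mono_ub R (- psi) (- a) b.
have dN t : derivable (- psi) t 1 by apply: derivableN.
have DN t : derive1 (- psi) t = - derive1 psi t.
  by rewrite !derive1E deriveN.
move=> /(_ dN) H.
have : (- psi) 1 - (- psi) 0 <= - a + b / 2.
  apply: H => t /hle; rewrite DN; lra.
move=> H2; have : - psi 1 - - psi 0 <= - a + b / 2 by exact: H2.
lra.
Qed.
End Mono2.

Section Taylor.
Context {R : realType} {n : nat}.
Implicit Types (f : 'rV[R]_n -> R) (z d v : 'rV[R]_n).

Lemma diff_dot f z v : 'd f z v = dotv (grad f z) v.
Proof.
rewrite {1}(row_sum_delta v) linear_sum /dotv; apply: eq_bigr => j _.
by rewrite linearZ /= mxE mulrC.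
Qed.

Lemma dpsi f z d t : differentiable f (z + t *: d) ->
  derivable (fun s : R => f (z + s *: d)) t 1 /\
  derive1 (fun s : R => f (z + s *: d)) t = 'd f (z + t *: d) d.
Proof.
move=> df.
have E : (fun h : R => h^-1 *: (((fun s : R => f (z + s *: d)) \o shift t) (h *: (1:R)) - f (z + t *: d)))
  = (fun h : R => h^-1 *: ((f \o shift (z + t *: d)) (h *: d) - f (z + t *: d))).
  apply/funext => h /=; congr (_ *: (f _ - _)).
  by rewrite [h *: 1]mulr1 scalerDl addrCA.
split; first by rewrite /derivable E; exact: diff_derivable.
by rewrite derive1E /derive E; exact: deriveE.
Qed.

End Taylor.

Section T.
Context {R : realType} {n : nat}.
Implicit Types (f : 'rV[R]_n -> R) (z d v : 'rV[R]_n).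
Lemma taylor f L z d : (forall w, differentiable f w) ->
  (forall z w, enorm (grad f z - grad f w) <= L * enorm (z - w)) ->
  `|f (z + d) - f z - dotv (grad f z) d| <= L / 2 * enorm d ^+ 2.
Proof.
move=> df lip.
pose psi := fun s : R => f (z + s *: d).
have dps t : derivable psi t 1 by have [] := dpsi f z d t (df (z + t *: d)).
have Dps t : derive1 psi t = dotv (grad f z) d + dotv (grad f (z + t *: d) - grad f z) d.
  have [_ ->] := dpsi f z d t (df (z + t *: d)).
  rewrite (diff_dot f (z + t *: d) d).
  rewrite (dotvBl (grad f (z + t *: d)) (grad f z) d).
  by rewrite [RHS]addrC subrK.
have bnd t : 0 < t < 1 -> `|dotv (grad f (z + t *: d) - grad f z) d| <= L * enorm d ^+ 2 * t.
  move=> /andP[t0 _].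
  apply: le_trans (CS _ _) _.
  have E : z + t *: d - z = t *: d by rewrite addrC addKr.
  have := lip (z + t *: d) z; rewrite E enormZ (ger0_norm (ltW t0)) => H.
  rewrite expr2.
  have := enorm_ge0 d => H0.
  have -> : L * (enorm d * enorm d) * t = L * (t * enorm d) * enorm d by ring.
  by apply: ler_wpM2r.
have p1 : psi 1 = f (z + d) by rewrite /psi scale1r.
have p0 : psi 0 = f z by rewrite /psi scale0r addr0.
rewrite ler_norml; apply/andP; split.
  have := @mono_lb R psi (dotv (grad f z) d) (L * enorm d ^+ 2) dps.
  rewrite p1 p0 => H.
  suff : dotv (grad f z) d - L * enorm d ^+ 2 / 2 <= f (z + d) - f z by lra.
  apply: H => t /bnd; rewrite Dps ler_norml => /andP[? ?]; lra.
have := @mono_ub R psi (dotv (grad f z) d) (L * enorm d ^+ 2) dps.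
rewrite p1 p0 => H.
suff : f (z + d) - f z <= dotv (grad f z) d + L * enorm d ^+ 2 / 2 by lra.
apply: H => t /bnd; rewrite Dps ler_norml => /andP[? ?]; lra.
Qed.

End T.

Section InfNorm.
Variable R : realType.

Lemma inf_norm_ge0 m k (A : 'M[R]_(m, k)) : 0 <= inf_norm A.
Proof. exact: bigmax_ge_id. Qed.

Lemma inf_norm_row m k (A : 'M[R]_(m, k)) i : \sum_j `|A i j| <= inf_norm A.
Proof. exact: (le_bigmax _ (fun i => \sum_j `|A i j|) i). Qed.

Lemma row_bound m k (A : 'M[R]_(m, k)) (c : 'cV[R]_k) rho i :
  0 <= rho -> (forall j, `|c j 0| <= rho) -> `|(A *m c) i 0| <= inf_norm A * rho.
Proof.
move=> r0 hc; rewrite mxE.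
apply: le_trans (ler_norm_sum _ _ _) _.
have h2 : (\sum_j `|A i j|) * rho <= inf_norm A * rho by apply: ler_wpM2r =>//; apply: inf_norm_row.
apply: le_trans h2; rewrite mulr_suml.
apply: ler_sum => j _; rewrite normrM; apply: ler_wpM2l => //.
Qed.
End InfNorm.

Section Model.
Context {R : realType} {n p : nat}.
Variables (x : 'rV[R]_n) (Delta : R)
  (ys : 'I_p -> 'rV[R]_n) (f : 'rV[R]_n -> R).
Hypothesis Dpos : 0 < Delta.
Hypothesis Funit : Fhat x Delta ys \in unitmx.

Let d i := ys i - x.
Let H := Hmod x Delta ys f.
Definition QF (u v : 'rV[R]_n) := (u *m H *m v^T) 0 0.

Lemma dotv_mx (u v : 'rV[R]_n) : (u *m v^T) 0 0 = dotv u v.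
Proof. by rewrite mxE; apply: eq_bigr => j _; rewrite mxE. Qed.

Lemma QFE u v : QF u v = \sum_i lam x Delta ys f i * (dotv u (d i) * dotv (d i) v).
Proof.
rewrite /QF /H /Hmod mulmx_sumr mulmx_suml summxE; apply: eq_bigr => i _.
rewrite -scalemxAr -scalemxAl mxE; congr (_ * _).
have -> : u *m ((d i)^T *m d i) *m v^T = (u *m (d i)^T) *m (d i *m v^T) by rewrite !mulmxA.
by rewrite mxE big_ord1 !dotv_mx.
Qed.

Lemma QF_dot u v : QF u v = dotv (u *m H) v.
Proof. by rewrite /QF dotv_mx. Qed.

Lemma QFC u v : QF u v = QF v u.
Proof.
rewrite !QFE; apply: eq_bigr => i _.
by rewrite [dotv u _]dotvC [dotv _ v]dotvC [X in _ * X = _]mulrC.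
Qed.

Lemma QFDl u v w : QF (u + v) w = QF u w + QF v w.
Proof. by rewrite /QF !mulmxDl mxE. Qed.

Lemma QFZl a u w : QF (a *: u) w = a * QF u w.
Proof. by rewrite /QF -!scalemxAl mxE. Qed.

Lemma QFDr u v w : QF w (u + v) = QF w u + QF w v.
Proof. by rewrite !(QFC w) QFDl. Qed.

Lemma QFZr a u w : QF w (a *: u) = a * QF w u.
Proof. by rewrite !(QFC w) QFZl. Qed.

Lemma modelE y : model x Delta ys f y =
  cmod x Delta ys f + dotv (gmod x Delta ys f) (y - x) + 2^-1 * QF (y - x) (y - x).
Proof. by []. Qed.

Let F := Fhat x Delta ys.
Let M := Mhat x Delta ys.
Let P := Phat x Delta ys.
Let s := sol x Delta ys f.

Lemma Dneq0 : Delta != 0.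
Proof. by rewrite gt_eqF. Qed.

Lemma FsolE : F *m s = rhs ys f.
Proof. by rewrite /s /sol mulKVmx. Qed.

Lemma blockE (a : 'cV[R]_p) (b : 'cV[R]_(1 + n)) :
  F *m col_mx a b = col_mx (P *m a + M *m b) (M^T *m a).
Proof. by rewrite /F /Fhat mul_block_col mul0mx addr0. Qed.

Lemma shatE i j : shat x Delta ys i 0 j = Delta^-1 * d i 0 j.
Proof. by rewrite /shat mxE. Qed.

Lemma Mrow (b : 'cV[R]_(1 + n)) i :
  (M *m b) i 0 = b (lshift n 0) 0 + \sum_j shat x Delta ys i 0 j * b (rshift 1 j) 0.
Proof.
rewrite mxE big_split_ord /= big_ord1; congr (_ + _).
  by rewrite /M /Mhat row_mxEl mxE mul1r.
by apply: eq_bigr => j _; rewrite /M /Mhat row_mxEr mxE.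
Qed.

Lemma interp i : model x Delta ys f (ys i) = f (ys i).
Proof.
have E := FsolE.
rewrite -(vsubmxK s) blockE /rhs in E.
have E1 := congr1 (fun A => usubmx A i 0) E.
rewrite /= !col_mxKu in E1. move: E1; rewrite [X in X = _]mxE [X in _ = X]mxE Mrow => E1.
rewrite modelE -E1 [RHS]addrC -/(d i); congr (_ + _ + _).
- by rewrite mxE.
- rewrite /dotv; apply: eq_bigr => j _.
  rewrite /gmod shatE !mxE.
  by rewrite mulrAC.
- rewrite QFE mulr_sumr [RHS]mxE; apply: eq_bigr => k _.
  rewrite /P /Phat mxE mxE /lam /lamhat /shat dotvZl dotvZr (dotvC (d k)).
  rewrite -/(d i) -/(d k).
  move: (s (lshift (1 + n) k) 0) (dotv (d i) (d k)) => a b.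
  have := Dneq0 => D0.
  by field.
Qed.

Definition rr i := f (ys i) - f x - dotv (grad f x) (d i).
Definition wv : 'cV[R]_(1 + n) := col_mx (const_mx (f x) : 'cV[R]_1) (Delta *: (grad f x)^T).

Lemma Mw i : (M *m wv) i 0 = f x + dotv (grad f x) (d i).
Proof.
rewrite Mrow /wv col_mxEu mxE; congr (_ + _).
rewrite /dotv; apply: eq_bigr => j _.
rewrite col_mxEd shatE !mxE.
move: (grad f x 0 j) (ys i 0 j - x 0 j) => a b.
have := Dneq0 => D0.
by field.
Qed.

Lemma rhs_dec : rhs ys f = F *m col_mx 0 wv + col_mx (\col_i rr i) 0.
Proof.
rewrite blockE !mulmx0 add0r add_col_mx addr0 /rhs; congr col_mx.
apply/colP => i; rewrite [RHS]mxE Mw [(\col__ _) i 0]mxE [(\col__ _) i 0]mxE /rr.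
by move: (f (ys i)) (f x) (dotv (grad f x) (d i)) => A B C; ring.
Qed.

Lemma lamhat_dec i :
  lamhat x Delta ys f i = (invmx F *m col_mx (\col_i rr i) 0) (lshift (1 + n) i) 0.
Proof.
rewrite /lamhat /sol rhs_dec mulmxDr mulKmx // [LHS]mxE col_mxEu mxE add0r.
by [].
Qed.

Lemma sq_le (a b : R) : 0 <= a -> a <= b -> a ^+ 2 <= b ^+ 2.
Proof. by move=> a0 ab; rewrite !expr2 ler_pM. Qed.

Lemma d_ys i : x + d i = ys i.
Proof. by rewrite /d addrC subrK. Qed.

Lemma lamhat_bound L beta : 0 <= L -> (forall w, differentiable f w) ->
  (forall z w, enorm (grad f z - grad f w) <= L * enorm (z - w)) ->
  (forall i, enorm (d i) <= beta * Delta) ->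
  forall i, `|lamhat x Delta ys f i| <= inf_norm (invmx F) * (L / 2 * (beta * Delta) ^+ 2).
Proof.
move=> L0 df lip hb i; rewrite lamhat_dec; apply: row_bound.
  by apply: mulr_ge0; [lra|exact: sqr_ge0].
move=> k; rewrite -(fintype.splitK k); case: (fintype.split k) => [a|b] /=.
  rewrite col_mxEu mxE /rr.
  have T := taylor f L x (d a) df lip; rewrite d_ys in T.
  apply: le_trans T _; apply: ler_wpM2l; first lra.
  exact: sq_le (enorm_ge0 _) (hb a).
rewrite col_mxEd mxE normr0.
by apply: mulr_ge0; [lra|exact: sqr_ge0].
Qed.

Lemma QF_bound K beta u v : (forall i, `|lamhat x Delta ys f i| <= K) ->
  (forall i, enorm (d i) <= beta * Delta) ->
  `|QF u v| <= p%:R * (K / Delta ^+ 4) * (beta * Delta) ^+ 2 * (enorm u * enorm v).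
Proof.
move=> hK hb; rewrite QFE.
apply: le_trans (ler_norm_sum _ _ _) _.
have -> : p%:R * (K / Delta ^+ 4) * (beta * Delta) ^+ 2 * (enorm u * enorm v) =
  \sum_(i < p) (K / Delta ^+ 4 * (beta * Delta) ^+ 2 * (enorm u * enorm v)).
  by rewrite sumr_const card_ord -!mulrA mulr_natl.
apply: ler_sum => i _; rewrite normrM (normrM (dotv u (d i))).
have K0 : 0 <= K by exact: le_trans (normr_ge0 _) (hK i).
have D4 : 0 < Delta ^+ 4 by apply: exprn_gt0.
have h1 : `|lam x Delta ys f i| <= K / Delta ^+ 4.
  rewrite /lam normrM normfV (gtr0_norm D4).
  by apply: ler_wpM2r; [rewrite invr_ge0 ltW|exact: hK].
have h2 := CS u (d i).
have h3 := CS (d i) v.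
have h4 : enorm (d i) * enorm (d i) <= (beta * Delta) ^+ 2.
  by rewrite expr2; apply: ler_pM; rewrite ?enorm_ge0.
have h5 := ler_pM (normr_ge0 _) (mulr_ge0 (normr_ge0 _) (normr_ge0 _)) h1
  (ler_pM (normr_ge0 _) (normr_ge0 _) h2 h3).
apply: le_trans h5 _.
rewrite -mulrA; apply: ler_wpM2l; first by rewrite divr_ge0 // ltW.
have -> : enorm u * enorm (d i) * (enorm (d i) * enorm v) =
  (enorm (d i) * enorm (d i)) * (enorm u * enorm v) by ring.
by apply: ler_wpM2r => //; rewrite mulr_ge0 ?enorm_ge0.
Qed.

Lemma uH_bound k u : (forall u v, `|QF u v| <= k * (enorm u * enorm v)) -> 0 <= k ->
  enorm (u *m H) <= k * enorm u.
Proof.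
move=> hQ k0; set z := u *m H.
have h : enorm z * enorm z <= (k * enorm u) * enorm z.
  rewrite -expr2 sqr_enorm -/z -QF_dot -mulrA.
  exact: le_trans (ler_norm _) (hQ u z).
have [z0|zpos] := eqVneq (enorm z) 0.
  by rewrite z0 mulr_ge0 ?enorm_ge0.
have zp : 0 < enorm z by rewrite lt_def zpos enorm_ge0.
by rewrite -(ler_pM2r zp).
Qed.

End Model.

Section DirPoly.
Context {R : realType} {n : nat}.

Lemma dq2 (c a b t : R) :
  is_derive t 1 (fun s : R => c + (a * s + b * (s * s))) (a + b * (t + t)).
Proof.
have h := is_deriveD (is_derive_cst c t 1) (@dq R a b t).
have E : (fun s : R => c + (a * s + b * (s * s))) = (cst c + (fun s : R => a * s + b * (s * s)))%R.
  by apply/funext => s.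
by rewrite E; apply: (is_derive_eq h); rewrite add0r.
Qed.

Lemma dir_poly (F : 'rV[R]_n -> R) y v (B C : R) :
  (forall h : R, F (h *: v + y) = F y + h * B + h * h * C) ->
  derivable F y v /\ 'D_v F y = B.
Proof.
move=> hF.
pose q := fun s : R => F y + (B * s + C * (s * s)).
have E : (fun h : R => h^-1 *: ((F \o shift y) (h *: v) - F y)) =
  (fun h : R => h^-1 *: ((q \o shift 0) (h *: (1:R)) - q 0)).
  apply/funext => h; rewrite /= hF /q [h *: 1]mulr1 addr0 !mulr0 !addr0.
  congr (_ *: _); ring.
have [dq dv] := dq2 (F y) B C 0.
split; first by rewrite /derivable E.
rewrite /derive E -/(derive q 0 1) dv; ring.
Qed.
End DirPoly.

Section DiffHelp.
Context {R : realType} {n : nat}.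
Implicit Types (F G : 'rV[R]_n -> R) (y : 'rV[R]_n).

Lemma dM F G y : differentiable F y -> differentiable G y ->
  differentiable (fun z => F z * G z) y.
Proof. move=> hf hg; exact: differentiableM hf hg. Qed.

Lemma dD F G y : differentiable F y -> differentiable G y ->
  differentiable (fun z => F z + G z) y.
Proof. move=> hf hg; exact: differentiableD hf hg. Qed.

Lemma dC (c : R) y : differentiable (fun _ : 'rV[R]_n => c) y.
Proof. exact: differentiable_cst. Qed.

Lemma dS m (Fs : 'I_m -> 'rV[R]_n -> R) y : (forall i, differentiable (Fs i) y) ->
  differentiable (fun z => \sum_(i < m) Fs i z) y.
Proof. by move=> h; rewrite -fct_sumE; exact: differentiable_sum. Qed.

Lemma dcoord (j : 'I_n) y : differentiable (fun z : 'rV[R]_n => z 0 j) y.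
Proof. exact: differentiable_coord. Qed.

Lemma ddot (x w : 'rV[R]_n) y : differentiable (fun z => dotv (z - x) w) y.
Proof.
rewrite /dotv; apply: dS => j.
have -> : (fun z : 'rV[R]_n => (z - x) 0 j * w 0 j) = (fun z => (z 0 j + (- x 0 j)) * w 0 j).
  by apply/funext => z; rewrite !mxE.
by apply: dM; [apply: dD; [exact: dcoord|exact: dC]|exact: dC].
Qed.
End DiffHelp.

Section ModelD.
Context {R : realType} {n p : nat}.
Variables (x : 'rV[R]_n) (Delta : R) (ys : 'I_p -> 'rV[R]_n) (f : 'rV[R]_n -> R).
Let m := model x Delta ys f.
Let H := Hmod x Delta ys f.
Let g := gmod x Delta ys f.

Lemma model_diff y : differentiable m y.
Proof.
have -> : m = (fun z => cmod x Delta ys f + dotv (z - x) g + 2^-1 *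
   \sum_(i < p) (lam x Delta ys f i * (dotv (z - x) (ys i - x) * dotv (z - x) (ys i - x)))).
  apply/funext => z; rewrite /m modelE QFE (dotvC g); congr (_ + _ * _).
  by apply: eq_bigr => i _; rewrite (dotvC (ys i - x) (z - x)).
apply: dD; first by apply: dD; [exact: dC|exact: ddot].
apply: dM; first exact: dC.
apply: dS => i; apply: dM; first exact: dC.
by apply: dM; exact: ddot.
Qed.

Lemma model_shift y v (h : R) : m (h *: v + y) =
  m y + h * (dotv g v + QF x Delta ys f (y - x) v) + h * h * (2^-1 * QF x Delta ys f v v).
Proof.
rewrite /m /g !modelE -[h *: v + y - x]addrA (dotvDr (h *: v) (y - x)) (dotvZr h v) (QFDl x Delta ys f (h *: v) (y - x)) (QFDr x Delta ys f (h *: v) (y - x) (h *: v)) (QFDr x Delta ys f (h *: v) (y - x) (y - x)) !QFZl !QFZr.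
rewrite (QFC x Delta ys f v (y - x)).
move: (cmod x Delta ys f) (dotv g v) (dotv g (y - x)) (QF x Delta ys f v v)
  (QF x Delta ys f (y - x) v) (QF x Delta ys f (y - x) (y - x)) => a b c e k l.
by field.
Qed.

Lemma dotv_e (w : 'rV[R]_n) j : dotv w (delta_mx 0 j) = w 0 j.
Proof.
rewrite /dotv (bigD1 j) //= big1 => [|k kj]; first by rewrite mxE !eqxx mulr1 addr0.
by rewrite mxE (negbTE kj) andbF mulr0.
Qed.

Lemma grad_model y : grad m y = g + (y - x) *m H.
Proof.
apply/rowP => j; rewrite gradE -deriveE; last exact: model_diff.
have [_ ->] := dir_poly _ _ _ _ _ (model_shift y (delta_mx 0 j)).
by rewrite QF_dot -dotvDl dotv_e.
Qed.

End ModelD.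

Section Main.
Context {R : realType} {n p : nat}.
Variables (x : 'rV[R]_n) (Delta : R) (ys : 'I_p -> 'rV[R]_n) (f : 'rV[R]_n -> R)
  (Mdag : 'M[R]_(1 + n, p)).
Hypothesis Dpos : 0 < Delta.
Hypothesis Funit : Fhat x Delta ys \in unitmx.
Hypothesis MP : is_MP_pinv (Mhat x Delta ys) Mdag.
Let M := Mhat x Delta ys.
Let F := Fhat x Delta ys.

Lemma M_inj (u : 'cV[R]_(1 + n)) : M *m u = 0 -> u = 0.
Proof.
move=> Mu.
have h : F *m col_mx 0 u = 0.
  by rewrite /F blockE !mulmx0 add0r Mu col_mx0.
have := congr1 (mulmx (invmx F)) h; rewrite mulKmx // mulmx0 => h2.
by have := congr1 dsubmx h2; rewrite col_mxKd => ->; rewrite -col_mx0 col_mxKd.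
Qed.

Lemma Mdag_left (u : 'cV[R]_(1 + n)) : Mdag *m (M *m u) = u.
Proof.
case: MP => h1 _ _ _.
apply/eqP; rewrite -subr_eq0; apply/eqP; apply: M_inj.
by rewrite mulmxBr !mulmxA h1 subrr.
Qed.

Definition e0 := cmod x Delta ys f - f x.
Definition eg := gmod x Delta ys f - grad f x.
Definition vv : 'cV[R]_(1 + n) := col_mx (const_mx e0 : 'cV[R]_1) (Delta *: eg^T).

Lemma Mvv i : (M *m vv) i 0 = e0 + dotv eg (ys i - x).
Proof.
rewrite Mrow /vv col_mxEu mxE; congr (_ + _).
rewrite /dotv; apply: eq_bigr => j _.
rewrite col_mxEd shatE !mxE.
move: (eg 0 j) => a.
have D0 : Delta != 0 by rewrite gt_eqF.
by field.
Qed.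

End Main.

Lemma fin_arith (R : realFieldType) (E A B C SX X kHDu LDu kHD LD : R) : E <= A + B + C -> A <= 2^-1*SX -> B <= kHDu -> C <= LDu -> kHDu <= kHD -> LDu <= LD -> 0 <= X -> 0 <= SX -> 0 <= kHD -> E <= X + SX + (LD + kHD) + 2*kHD.
Proof. move=> *. lra. Qed.

Lemma zid (V : zmodType) (a b c d : V) : a + b - c = a - d + b - (c - d).
Proof. by rewrite opprB [a - d + b]addrAC -!addrA addKr. Qed.

Theorem theorem5p15 (R : realType) (n p : nat) (f : 'rV[R]_n -> R) (L : R)
  (x : 'rV[R]_n) (Delta beta : R) (ys : 'I_p -> 'rV[R]_n)
  (Mdag : 'M[R]_(1 + n, p)) :
  (n.+2 <= p)%N -> (p <= (n.+1 * n.+2)./2 - 1)%N ->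
  (exists b : R, forall z, b <= f z) ->
  (forall z, differentiable f z) ->
  continuous (grad f) ->
  (forall z w, enorm (grad f z - grad f w) <= L * enorm (z - w)) ->
  0 < Delta -> 0 < beta ->
  (forall i, enorm (ys i - x) <= beta * Delta) ->
  Fhat x Delta ys \in unitmx ->
  is_MP_pinv (Mhat x Delta ys) Mdag ->
  let kH := L / 2 * p%:R * beta ^+ 4 * inf_norm (invmx (Fhat x Delta ys)) in
  let kmf := (L + kH) / 2 * (1 + Num.sqrt n%:R) * beta ^+ 2 * inf_norm Mdag
             + (L + kH) / 2 in
  let kmg := 2 * kmf + 2 * kH in
  let m := model x Delta ys f in
  forall y : 'rV[R]_n, enorm (y - x) <= Delta ->
    `|m y - f y| <= kmf * Delta ^+ 2 /\
    enorm (grad m y - grad f y) <= kmg * Delta.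
Proof.
move=> hp1 hp2 _ hdiff _ hlip hD hbeta hys hF hMP kH kmf kmg m y hy.
have n0 : (0 < n)%N.
  rewrite lt0n; apply/negP => /eqP n0; move: hp1 hp2; rewrite n0 => h1 h2.
  by have := leq_trans h1 h2.
pose j0 : 'I_n := Ordinal n0.
have L0 : 0 <= L.
  have := hlip (delta_mx 0 j0) 0; rewrite !subr0 => h.
  have e1 : enorm (delta_mx 0 j0 : 'rV[R]_n) = 1.
    by rewrite /enorm dotv_e mxE !eqxx sqrtr1.
  by rewrite e1 mulr1 in h; exact: le_trans (enorm_ge0 _) h.
pose infF := inf_norm (invmx (Fhat x Delta ys)).
pose infM := inf_norm Mdag.
have infF0 : 0 <= infF by exact: inf_norm_ge0.
have infM0 : 0 <= infM by exact: inf_norm_ge0.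
have D0 : Delta != 0 by rewrite gt_eqF.
have kHE : kH = L / 2 * p%:R * beta ^+ 4 * infF by [].
have kmfE : kmf = (L + kH) / 2 * (1 + Num.sqrt n%:R) * beta ^+ 2 * infM + (L + kH) / 2 by [].
have kmgE : kmg = 2 * kmf + 2 * kH by [].
have kH0 : 0 <= kH.
  rewrite kHE; apply: mulr_ge0 => //; apply: mulr_ge0; last by rewrite exprn_ge0 // ltW.
  by apply: mulr_ge0; [lra|exact: ler0n].
have hlam := lamhat_bound x Delta ys f hD hF L beta L0 hdiff hlip hys.
have hQ : forall u v, `|QF x Delta ys f u v| <= kH * (enorm u * enorm v).
  move=> u v; apply: le_trans (QF_bound x Delta ys f hD _ beta u v hlam hys) _.
  have -> : p%:R * (infF * (L / 2 * (beta * Delta) ^+ 2) / Delta ^+ 4) * (beta * Delta) ^+ 2 = kH.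
    by rewrite kHE; field.
  by [].
pose K0 := (L + kH) / 2 * (beta * Delta) ^+ 2.
have K00 : 0 <= K0 by apply: mulr_ge0; [lra|exact: sqr_ge0].
have hsig : forall i, `|(Mhat x Delta ys *m vv x Delta ys f) i 0| <= K0.
  move=> i; rewrite Mvv //.
  have hi := interp x Delta ys f hD hF i.
  rewrite modelE in hi.
  have Ti := taylor f L x (ys i - x) hdiff hlip; rewrite d_ys in Ti.
  have E : e0 x Delta ys f + dotv (eg x Delta ys f) (ys i - x) =
     (f (ys i) - f x - dotv (grad f x) (ys i - x)) - 2^-1 * QF x Delta ys f (ys i - x) (ys i - x).
    rewrite /e0 /eg dotvBl; lra.
  rewrite E; apply: le_trans (ler_normB _ _) _.
  rewrite normrM (ger0_norm (_ : 0 <= 2^-1)); last by rewrite invr_ge0.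
  have q := hQ (ys i - x) (ys i - x).
  have s1 := sq_le _ _ (enorm_ge0 (ys i - x)) (hys i).
  have s2 : L / 2 * enorm (ys i - x) ^+ 2 <= L / 2 * (beta * Delta) ^+ 2.
    by apply: ler_wpM2l => //; lra.
  have s3 : kH * (enorm (ys i - x) * enorm (ys i - x)) <= kH * (beta * Delta) ^+ 2.
    by apply: ler_wpM2l => //; rewrite -expr2.
  rewrite /K0; lra.
pose Kb := infM * K0.
have hv k : `|vv x Delta ys f k 0| <= Kb.
  rewrite -(Mdag_left x Delta ys Mdag hF hMP (vv x Delta ys f)).
  exact: row_bound K00 hsig.
have he0 : `|e0 x Delta ys f| <= Kb.
  by have := hv (lshift n 0); rewrite /vv col_mxEu mxE.
have heg j : `|eg x Delta ys f 0 j| <= Kb / Delta.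
  have := hv (rshift 1 j); rewrite /vv col_mxEd !mxE normrM (gtr0_norm hD) => h.
  by rewrite ler_pdivlMr // mulrC.
pose S := Num.sqrt (n%:R : R).
have S0 : 0 <= S by exact: sqrtr_ge0.
have hegn : enorm (eg x Delta ys f) <= S * (Kb / Delta) := enorm_coord _ _ heg.
have Kb0 : 0 <= Kb by exact: mulr_ge0.
pose u := y - x.
have hu0 : 0 <= enorm u by exact: enorm_ge0.
have hxu : x + u = y by rewrite /u addrC subrK.
have SKb : S * (Kb / Delta) * Delta = S * Kb by field.
have heu : enorm (eg x Delta ys f) * enorm u <= S * Kb.
  by rewrite -SKb; exact: ler_pM (enorm_ge0 _) hu0 hegn hy.
have hu2 : enorm u ^+ 2 <= Delta ^+ 2 := sq_le _ _ hu0 hy.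
split.
  have hm : m y - f y = e0 x Delta ys f + dotv (eg x Delta ys f) u + 2^-1 * QF x Delta ys f u u
      - (f (x + u) - f x - dotv (grad f x) u).
    rewrite hxu /m modelE /e0 /eg dotvBl -/u; lra.
  rewrite hm.
  have Tt := taylor f L x u hdiff hlip.
  have q := hQ u u.
  have t1 : L / 2 * enorm u ^+ 2 <= L / 2 * Delta ^+ 2 by apply: ler_wpM2l => //; lra.
  have t2 : kH * (enorm u * enorm u) <= kH * Delta ^+ 2.
    by apply: ler_wpM2l => //; rewrite -expr2.
  have c1 := CS (eg x Delta ys f) u.
  have goalE : kmf * Delta ^+ 2 = Kb + S * Kb + (L + kH) / 2 * Delta ^+ 2.
    by rewrite kmfE -/S /Kb /K0; ring.
  rewrite goalE.
  apply: le_trans (ler_normB _ _) _.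
  apply: le_trans (lerD (ler_normD _ _) (lexx _)) _.
  apply: le_trans (lerD (lerD (ler_normD _ _) (lexx _)) (lexx _)) _.
  rewrite normrM (ger0_norm (_ : 0 <= 2^-1)); last by rewrite invr_ge0.
  lra.
have gE : grad m y - grad f y =
    eg x Delta ys f + u *m Hmod x Delta ys f - (grad f y - grad f x).
  rewrite /m grad_model /eg -/u.
  exact: zid.
rewrite gE.
have b1 : enorm (eg x Delta ys f + u *m Hmod x Delta ys f - (grad f y - grad f x)) <=
    enorm (eg x Delta ys f) + enorm (u *m Hmod x Delta ys f) + enorm (grad f y - grad f x).
  apply: le_trans (enormD _ _) _; rewrite enormN.
  exact: lerD (enormD _ _) (lexx _).
have b2 := uH_bound x Delta ys f kH u hQ kH0.
have b3 := hlip y x.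
have b4 : kH * enorm u <= kH * Delta by apply: ler_wpM2l.
have b5 : L * enorm u <= L * Delta by apply: ler_wpM2l.
have SX : S * (Kb / Delta) = 2^-1 * (S * (infM * (L + kH) * beta ^+ 2 * Delta)).
  by rewrite /Kb /K0; field.
have goalE2 : kmg * Delta = infM * (L + kH) * beta ^+ 2 * Delta
    + S * (infM * (L + kH) * beta ^+ 2 * Delta) + (L * Delta + kH * Delta) + 2 * (kH * Delta).
  by rewrite kmgE kmfE -/S; field.
have X0 : 0 <= infM * (L + kH) * beta ^+ 2 * Delta.
  by apply: mulr_ge0; [apply: mulr_ge0; [apply: mulr_ge0 => //; lra|exact: sqr_ge0]|exact: ltW].
have SX0 : 0 <= S * (infM * (L + kH) * beta ^+ 2 * Delta) by exact: mulr_ge0.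
rewrite goalE2; move: hegn; rewrite SX => hegn.
rewrite -/u in b3.
have kHD0 : 0 <= kH * Delta by apply: mulr_ge0 => //; exact: ltW.
exact: fin_arith b1 hegn b2 b3 b4 b5 X0 SX0 kHD0.
Qed.
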